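(* Let $N\ge 2$ and $m\ge N$ be integers, let $c_1,\dots,c_m$ be contents with request probabilities $\rho_1,\dots,\rho_m\ge 0$, $\sum_{\ell=1}^m\rho_\ell=1$, and set $\mathcal{P}_{\textup{hit}}=\sum_{\kappa=1}^{N}\rho_\kappa$. Consider users $u_1,\dots,u_N$, where $u_\kappa$ caches exactly the content $c_\kappa$, and where each user $u_\mu$ independently requests a single content $R_\mu$ with $\Pr(R_\mu=c_\ell)=\rho_\ell$. Let $K$ be uniform on $\{1,\dots,N\}$, independent of the requests, and consider the operating mode of the user $u_K$ (modes defined in the context). Then \begin{align*} \mathcal{P}_{\textup{SR}}&= \tfrac{1}{N} \textstyle\sum_{\kappa=1}^{N} \rho_\kappa \left(1-\rho_\kappa\right)^{N-1},\\ \mathcal{P}_{\textup{SR-HDTX}} &= \tfrac{1}{N} \textstyle\sum_{\kappa=1}^{N}\rho_\kappa \left(1-\left(1-\rho_\kappa \right)^{N-1}\right),\\ \mathcal{P}_{\textup{FDTR}} &= \tfrac{1}{N} \textstyle\sum_{\kappa=1}^{N}\left(\mathcal{P}_{\textup{hit}}-\rho_\kappa \right)\left(1-\left(1-\rho_\kappa \right)^{N-1}\right),\\ \mathcal{P}_{\textup{BFD}} &= \tfrac{1}{N} \textstyle\sum_{\kappa=1}^{N}\left(\mathcal{P}_{\textup{hit}}-\rho_\kappa \right)\rho_\kappa,\\ \mathcal{P}_{\textup{TNFD}} &= \tfrac{1}{N} \textstyle\sum_{\kappa=1}^{N}\left(\mathcal{P}_{\textup{hit}}-\rho_\kappa \right)\left(1-\rho_\kappa-\left(1-\rho_\kappa\right)^{N-1}\right),\\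 \mathcal{P}_{\textup{HDRX}} &= \tfrac{1}{N} \textstyle\sum_{\kappa=1}^{N}\left(\mathcal{P}_{\textup{hit}}-\rho_\kappa \right)\left(1-\rho_\kappa\right)^{N-1},\\ \mathcal{P}_{\textup{HDTX}} &= \tfrac{1}{N} \textstyle\sum_{\kappa=1}^{N}\left(1-\mathcal{P}_{\textup{hit}}\right)\left(1-\left(1-\rho_\kappa \right)^{N-1}\right),\\ \mathcal{P}_{\textup{HO}} &= \tfrac{1}{N} \textstyle\sum_{\kappa=1}^{N}\left(1-\mathcal{P}_{\textup{hit}}\right)\left(1-\rho_\kappa \right)^{N-1}. \end{align*}
   Context: For a user $u_\kappa$, let $S_\kappa$ be the event that there exists $\mu\ne\kappa$, $\mu\in\{1,\dots,N\}$, with $R_\mu=c_\kappa$ (some other user requests the content cached by $u_\kappa$). The operating modes of $u_\kappa$ are: SR (self-request): $R_\kappa=c_\kappa$ and not $S_\kappa$; SR-HDTX: $R_\kappa=c_\kappa$ and $S_\kappa$; FDTR (full-duplex transceiver): $R_\kappa=c_\mu$ for some $\mu\in\{1,\dots,N\}\setminus\{\kappa\}$, and $S_\kappa$; BFD (bi-directional full-duplex): $R_\kappa=c_\mu$ for some $\mu\in\{1,\dots,N\}\setminus\{\kappa\}$ and this $u_\mu$ has $R_\mu=c_\kappa$; TNFD (three-node full-duplex): FDTR holds but BFD does not; HDRX (half-duplex receiver): $R_\kappa=c_\mu$ for some $\mu\in\{1,\dots,N\}\setminus\{\kappa\}$ and not $S_\kappa$; HDTX (half-duplex transmitter): $R_\kappa\notin\{c_1,\dots,c_N\}$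 and $S_\kappa$; HO (hitting outage): $R_\kappa\notin\{c_1,\dots,c_N\}$ and not $S_\kappa$. For a mode $\Delta$, $\mathcal{P}_\Delta$ denotes the probability that $u_K$ is in mode $\Delta$. *)

(* Defs.v *)
From mathcomp Require Import all_boot all_order all_algebra.
Set Implicit Arguments. Unset Strict Implicit. Unset Printing Implicit Defensive.
Import Order.TTheory GRing.Theory Num.Theory.
Local Open Scope ring_scope.

(* Contents c_1..c_m are indexed 0..m-1; users u_1..u_N are indexed 0..N-1,
   user kappa caches content kappa.  A request profile is r : {ffun 'I_N -> 'I_m},
   r mu = l meaning R_mu = c_l. *)

Inductive mode := SR | SR_HDTX | FDTR | BFD | TNFD | HDRX | HDTX | HO.

Section Modes.
Variables N m : nat.
Implicit Types (k : 'I_N) (r : {ffun 'I_N -> 'I_m}).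

Definition req_is r (mu k : 'I_N) : bool := (val (r mu) == val k).

Definition S_ev r k : bool := [exists mu : 'I_N, (mu != k) && req_is r mu k].

Definition req_other r k : bool := [exists mu : 'I_N, (mu != k) && req_is r k mu].

Definition bfd r k : bool :=
  [exists mu : 'I_N, [&& mu != k, req_is r k mu & req_is r mu k]].

Definition req_miss r k : bool := [forall mu : 'I_N, ~~ req_is r k mu].

Definition in_mode (d : mode) r k : bool :=
  match d with
  | SR => req_is r k k && ~~ S_ev r k
  | SR_HDTX => req_is r k k && S_ev r k
  | FDTR => req_other r k && S_ev r k
  | BFD => bfd r k
  | TNFD => (req_other r k && S_ev r k) && ~~ bfd r k
  | HDRX => req_other r k && ~~ S_ev r k
  | HDTX => req_miss r k && S_ev r k
  | HO => req_miss r k && ~~ S_ev r k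
  end.

(* Probability that u_K is in mode d, with K uniform on users and the requests
   independent with Pr(R_mu = c_l) = rho l. *)
Definition mode_prob (R : numFieldType) (rho : nat -> R) (d : mode) : R :=
  \sum_(k : 'I_N) (N%:R)^-1 *
    \sum_(r : {ffun 'I_N -> 'I_m} | in_mode d r k) \prod_(mu : 'I_N) rho (val (r mu)).

Definition P_hit (R : numFieldType) (rho : nat -> R) : R := \sum_(k < N) rho k.

End Modes.

(* Main.v *)
Require Import Defs.
From mathcomp Require Import all_boot all_order all_algebra.
From mathcomp Require Import ring.
Import Order.TTheory GRing.Theory Num.Theory.
Local Open Scope ring_scope.

Section Pf.
Variables (R : realFieldType) (N m : nat) (rho : nat -> R).
Hypothesis Nm : (N <= m)%N.
Hypothesis rho1 : \sum_(l < m) rho l = 1.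

Local Notation FF := {ffun 'I_N -> 'I_m}.

Lemma prod_ifE (I : finType) (b : I -> bool) (F : I -> R) :
  \prod_i (if b i then F i else 0) = if [forall i, b i] then \prod_i F i else 0.
Proof.
case: (boolP [forall i, b i]) => H.
  by apply: eq_bigr => i _; rewrite (forallP H i).
have [i /negbTE bi] : exists i, ~~ b i.
  by apply/existsP; rewrite -negb_forall.
by rewrite (bigD1 i) //= bi mul0r.
Qed.

Lemma sum_ffun (g : 'I_N -> 'I_m -> bool) :
  \sum_(r : FF | [forall mu, g mu (r mu)]) \prod_(mu : 'I_N) rho (val (r mu))
  = \prod_mu \sum_(j | g mu j) rho (val j).
Proof.
rewrite big_mkcond /=.
rewrite [RHS](eq_bigr (fun mu => \sum_j (if g mu j then rho (val j) else 0)));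
  last by move=> mu _; rewrite big_mkcond.
rewrite bigA_distr_bigA /=.
by apply: eq_bigr => r _; rewrite prod_ifE.
Qed.

Lemma prod_sel (k : 'I_N) (P Q : pred 'I_m) :
  \prod_(mu : 'I_N) \sum_(j | if mu == k then P j else Q j) rho (val j)
  = (\sum_(j | P j) rho (val j)) * (\sum_(j | Q j) rho (val j)) ^+ N.-1.
Proof.
rewrite (bigD1 k) //= eqxx; congr (_ * _).
rewrite (eq_bigr (fun _ => \sum_(j | Q j) rho (val j))); last first.
  by move=> mu /negbTE ->.
by rewrite prodr_const cardC1 card_ord.
Qed.

Lemma rho1' : \sum_(0 <= l < m) rho l = 1.
Proof. by rewrite big_mkord. Qed.

Lemma sum_self (n : nat) : (n < m)%N ->
  \sum_(j : 'I_m | val j == n) rho (val j) = rho n.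
Proof.
move=> nm.
rewrite (eq_bigl (fun j => j == Ordinal nm)); last by move=> j; rewrite -val_eqE.
by rewrite big_pred1_eq.
Qed.

Lemma sum_ne (n : nat) : (n < m)%N ->
  \sum_(j : 'I_m | val j != n) rho (val j) = 1 - rho n.
Proof.
move=> nm; rewrite -rho1 [in RHS](bigD1 (Ordinal nm)) //= addrAC subrr add0r.
by apply: eq_bigl => j; rewrite -val_eqE.
Qed.

Lemma sum_miss :
  \sum_(j : 'I_m | (N <= val j)%N) rho (val j) = 1 - P_hit N rho.
Proof.
rewrite -(big_geq_mkord N m xpredT rho) -rho1' /P_hit -(big_mkord xpredT rho).
by rewrite (big_cat_nat (leq0n N) Nm) /= addrC addrK.
Qed.

Lemma sum_oth (n : 'I_N) :
  \sum_(j : 'I_m | (val j != val n) && (val j < N)%N) rho (val j) = P_hit N rho - rho n.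
Proof.
rewrite -(big_mkord (fun j => (j != val n) && (j < N)%N) rho).
rewrite -(big_nat_widen _ _ _ (fun j => j != val n) _ Nm) /P_hit -(big_mkord xpredT rho).
rewrite (bigD1_seq (val n)) ?iota_uniq ?mem_index_iota //= addrC addrK.
by apply: eq_bigl.
Qed.

Local Notation W r := (\prod_(mu : 'I_N) rho (val (r mu))).

Lemma notS (r : FF) k :
  ~~ S_ev r k = [forall mu, (mu != k) ==> (val (r mu) != val k)].
Proof.
rewrite /S_ev negb_exists; apply/eq_forallb => mu.
by rewrite negb_and implybE.
Qed.

Lemma and_notS (a : pred 'I_m) (r : FF) k :
  a (r k) && ~~ S_ev r k =
  [forall mu, if mu == k then a (r mu) else val (r mu) != val k].
Proof.
rewrite notS; apply/andP/forallP.
  case=> ha /forallP hs mu; case: eqP => [->//|/eqP ne].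
  exact: (implyP (hs mu) ne).
move=> h; split; first by have := h k; rewrite eqxx.
apply/forallP => mu; apply/implyP => ne.
by have := h mu; rewrite (negbTE ne).
Qed.

Lemma only_a (a : pred 'I_m) (r : FF) k :
  a (r k) = [forall mu, if mu == k then a (r mu) else xpredT (r mu)].
Proof.
apply/idP/forallP.
  by move=> h mu; case: eqP => [->//|//].
by move=> h; have := h k; rewrite eqxx.
Qed.

Lemma sumT : \sum_(j : 'I_m | xpredT j) rho (val j) = 1.
Proof. by rewrite -rho1. Qed.

Lemma sumA (a : pred 'I_m) k :
  \sum_(r : FF | a (r k)) W r = \sum_(j | a j) rho (val j).
Proof.
rewrite (eq_bigl _ _ (fun r => only_a a r k)).
rewrite (sum_ffun (fun mu j => if mu == k then a j else xpredT j)) prod_sel sumT.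
by rewrite expr1n mulr1.
Qed.

Lemma sumAnS (a : pred 'I_m) (k : 'I_N) :
  \sum_(r : FF | a (r k) && ~~ S_ev r k) W r
  = (\sum_(j | a j) rho (val j)) * (1 - rho k) ^+ N.-1.
Proof.
rewrite (eq_bigl _ _ (fun r => and_notS a r k)).
rewrite (sum_ffun (fun mu j => if mu == k then a j else val j != val k)).
rewrite (prod_sel k a (fun j => val j != val k)) sum_ne //.
exact: leq_trans (ltn_ord k) Nm.
Qed.

Lemma sumAS (a : pred 'I_m) (k : 'I_N) :
  \sum_(r : FF | a (r k) && S_ev r k) W r
  = (\sum_(j | a j) rho (val j)) * (1 - (1 - rho k) ^+ N.-1).
Proof.
have h : \sum_(r : FF | a (r k)) W r = \sum_(r : FF | a (r k) && S_ev r k) W r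
   + \sum_(r : FF | a (r k) && ~~ S_ev r k) W r by apply: bigID.
move: h; rewrite (sumA a k) => h.
by rewrite mulrBr mulr1 -(sumAnS a k) h addrK.
Qed.

Lemma req_otherE (r : FF) (k : 'I_N) :
  req_other r k = (fun j : 'I_m => (val j != val k) && (val j < N)%N) (r k).
Proof.
apply/existsP/andP.
  case=> mu /andP [ne /eqP e]; rewrite /= e; split; last exact: ltn_ord.
  by rewrite val_eqE.
case=> ne lt; exists (Ordinal lt); apply/andP; split; last by rewrite /req_is /=.
by rewrite -val_eqE.
Qed.

Lemma req_missE (r : FF) (k : 'I_N) :
  req_miss r k = (fun j : 'I_m => (N <= val j)%N) (r k).
Proof.
apply/forallP/idP.
  move=> h; rewrite /= leqNgt; apply/negP => lt.
  by have := h (Ordinal lt); rewrite /req_is eqxx.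
move=> le mu; rewrite /req_is; apply/negP => /eqP e.
by have := ltn_ord mu; rewrite -e ltnNge le.
Qed.

Lemma bfd_sub (r : FF) k : bfd r k -> req_other r k && S_ev r k.
Proof.
case/existsP=> mu /and3P [ne h1 h2]; apply/andP; split; apply/existsP; exists mu.
  by rewrite ne h1.
by rewrite ne h2.
Qed.

Lemma bfdE (r : FF) (k mu : 'I_N) : mu != k ->
  req_is r k mu && req_is r mu k =
  [forall i, if i == k then val (r i) == val mu
             else if i == mu then val (r i) == val k else xpredT (r i)].
Proof.
move=> ne; apply/idP/forallP.
  case/andP => h1 h2 i.
  case: eqP => [-> //|_]; case: eqP => [-> //|//].
move=> h; have := h k; rewrite eqxx => h1.
have := h mu; rewrite (negbTE ne) eqxx => h2.
by rewrite /req_is h1 h2.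
Qed.

Lemma sumBFD (k : 'I_N) :
  \sum_(r : FF | bfd r k) W r = (P_hit N rho - rho k) * rho k.
Proof.
rewrite big_mkcond /=.
transitivity (\sum_(r : FF) \sum_(mu : 'I_N)
   (if [&& mu != k, req_is r k mu & req_is r mu k] then W r else 0)).
  apply: eq_bigr => r _; case: (boolP (bfd r k)) => h.
    have /existsP [mu0 hmu0] := h.
    rewrite [RHS](bigD1 mu0) // hmu0 [X in _ = _ + X]big1 ?addr0 // => mu ne.
    case: ifP => // /and3P [_ e1 _].
    case/and3P: hmu0 => _ e0 _.
    move: ne; rewrite -val_eqE; move: e1 e0; rewrite /req_is => /eqP <- /eqP ->.
    by rewrite eqxx.
  rewrite big1 // => mu _; case: ifP => // c.
  by move/negP: h; case; apply/existsP; exists mu.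
rewrite exchange_big /=.
rewrite /P_hit [in RHS](bigD1 k) //= addrAC subrr add0r big_distrl /=.
rewrite [RHS]big_mkcond; apply: eq_bigr => mu _.
have [->|ne] := eqVneq mu k.
  by apply: big1.
rewrite /= -(big_mkcond (fun r : FF => req_is r k mu && req_is r mu k)) /=.
rewrite (eq_bigl _ _ (fun r => @bfdE r k mu ne)).
rewrite (sum_ffun (fun i j => if i == k then val j == val mu
             else if i == mu then val j == val k else xpredT j)).
rewrite (bigD1 k) //= eqxx (bigD1 mu) //= (negbTE ne) eqxx.
rewrite [X in _ * (_ * X) = _]big1; last first.
  move=> i /andP [ik im]; rewrite (negbTE ik) (negbTE im).
  by rewrite -[RHS]rho1; apply: eq_bigl.
rewrite !sum_self ?mulr1 //.
  exact: leq_trans (ltn_ord k) Nm.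
exact: leq_trans (ltn_ord mu) Nm.
Qed.

Lemma kltm (k : 'I_N) : (val k < m)%N.
Proof. exact: leq_trans (ltn_ord k) Nm. Qed.

Lemma mode_sum d (Y : 'I_N -> R) :
  (forall k, \sum_(r : FF | in_mode d r k) W r = Y k) ->
  mode_prob N m rho d = N%:R^-1 * \sum_(k < N) Y k.
Proof.
by move=> h; rewrite /mode_prob big_distrr /=; apply: eq_bigr => k _; rewrite h.
Qed.

Lemma sumFDTR k : \sum_(r : FF | in_mode FDTR r k) W r
   = (P_hit N rho - rho k) * (1 - (1 - rho k) ^+ N.-1).
Proof.
rewrite -(sum_oth k) -sumAS; apply: eq_bigl => r; by rewrite /= req_otherE.
Qed.

Lemma main :
  let P := mode_prob N m rho in
  let Ph := P_hit N rho in
  P SR = N%:R^-1 * \sum_(k < N) rho k * (1 - rho k) ^+ N.-1 /\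
      P SR_HDTX = N%:R^-1 * \sum_(k < N) rho k * (1 - (1 - rho k) ^+ N.-1) /\
      P FDTR = N%:R^-1 * \sum_(k < N) (Ph - rho k) * (1 - (1 - rho k) ^+ N.-1) /\
      P BFD = N%:R^-1 * \sum_(k < N) (Ph - rho k) * rho k /\
      P TNFD = N%:R^-1 * \sum_(k < N) (Ph - rho k) * (1 - rho k - (1 - rho k) ^+ N.-1) /\
      P HDRX = N%:R^-1 * \sum_(k < N) (Ph - rho k) * (1 - rho k) ^+ N.-1 /\
      P HDTX = N%:R^-1 * \sum_(k < N) (1 - Ph) * (1 - (1 - rho k) ^+ N.-1) /\
    P HO = N%:R^-1 * \sum_(k < N) (1 - Ph) * (1 - rho k) ^+ N.-1.
Proof.
move=> P Ph; rewrite /P /Ph.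
split; [|split; [|split; [|split; [|split; [|split; [|split]]]]]];
  apply: mode_sum => k.
- have := sumAnS (fun j : 'I_m => val j == val k) k.
  rewrite sum_self ?kltm // => <-; by apply: eq_bigl.
- have := sumAS (fun j : 'I_m => val j == val k) k.
  rewrite sum_self ?kltm // => <-; by apply: eq_bigl.
- exact: sumFDTR.
- by rewrite -sumBFD; apply: eq_bigl.
- have h : \sum_(r : FF | in_mode FDTR r k) W r =
     \sum_(r : FF | in_mode FDTR r k && bfd r k) W r
   + \sum_(r : FF | in_mode FDTR r k && ~~ bfd r k) W r by apply: bigID.
  have e : \sum_(r : FF | in_mode FDTR r k && bfd r k) W r = \sum_(r : FF | bfd r k) W r.
    apply: eq_bigl => r /=; case: (boolP (bfd r k)) => b.
      by rewrite (bfd_sub _ _ b).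
    by rewrite andbF.
  rewrite e sumBFD sumFDTR in h.
  have -> : \sum_(r : FF | in_mode TNFD r k) W r
     = \sum_(r : FF | in_mode FDTR r k && ~~ bfd r k) W r by apply: eq_bigl.
  have -> : \sum_(r : FF | in_mode FDTR r k && ~~ bfd r k) W r
     = (P_hit N rho - rho k) * (1 - (1 - rho k) ^+ N.-1)
       - (P_hit N rho - rho k) * rho k by rewrite h; ring.
  ring.
- rewrite -(sum_oth k) -sumAnS; apply: eq_bigl => r; by rewrite /= req_otherE.
- rewrite -sum_miss -sumAS; apply: eq_bigl => r; by rewrite /= req_missE.
- rewrite -sum_miss -sumAnS; apply: eq_bigl => r; by rewrite /= req_missE.
Qed.

End Pf.

Theorem theorem1 (R : realFieldType) (N m : nat) (rho : nat -> R) :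
  (2 <= N)%N -> (N <= m)%N ->
  (forall l, (l < m)%N -> 0 <= rho l) ->
  \sum_(l < m) rho l = 1 ->
  let P := mode_prob N m rho in
  let Ph := P_hit N rho in
  P SR = N%:R^-1 * \sum_(k < N) rho k * (1 - rho k) ^+ N.-1 /\
      P SR_HDTX = N%:R^-1 * \sum_(k < N) rho k * (1 - (1 - rho k) ^+ N.-1) /\
      P FDTR = N%:R^-1 * \sum_(k < N) (Ph - rho k) * (1 - (1 - rho k) ^+ N.-1) /\
      P BFD = N%:R^-1 * \sum_(k < N) (Ph - rho k) * rho k /\
      P TNFD = N%:R^-1 * \sum_(k < N) (Ph - rho k) * (1 - rho k - (1 - rho k) ^+ N.-1) /\
      P HDRX = N%:R^-1 * \sum_(k < N) (Ph - rho k) * (1 - rho k) ^+ N.-1 /\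
      P HDTX = N%:R^-1 * \sum_(k < N) (1 - Ph) * (1 - (1 - rho k) ^+ N.-1) /\
    P HO = N%:R^-1 * \sum_(k < N) (1 - Ph) * (1 - rho k) ^+ N.-1.
Proof.
move=> _ Nm _ rho1; exact: main.
Qed.
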